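(* Let $p_1,p_2,p_3,p_4>0$ with $\Delta:=p_1p_4-p_2p_3\neq0$, $S=p_1+p_2+p_3+p_4$, and let $u_1,u_2,v_1,v_2$ be given by \[ u_1=\frac{(p_1+p_2)(p_1+p_3)}{p_1S},\quad u_2=\frac{(p_1+p_2)(p_2+p_4)}{p_2S},\quad v_1=\frac{(p_1+p_3)(p_3+p_4)}{p_3S},\quad v_2=\frac{(p_2+p_4)(p_3+p_4)}{p_4S}. \] Let $N$ be a nonnegative integer and let $P_{m_1,m_2}(x_1,x_2)$ be formed with these $u$'s and $v$'s. Then for all nonnegative integers $x_1,x_2$ with $x_1+x_2\le N$ and $m_1,m_2$ with $m_1+m_2\le N$ (terms whose coefficient $N-m_1-m_2$, $m_1$, or $m_2$ vanishes being omitted), \begin{align*} &(N-m_1-m_2)\Big\{\frac{p_1p_3(p_2+p_4)S}{(p_1+p_3)\Delta}\big(P_{m_1+1,m_2}-P_{m_1,m_2}\big)-\frac{p_2p_4(p_1+p_3)S}{(p_2+p_4)\Delta}\big(P_{m_1,m_2+1}-P_{m_1,m_2}\big)\Big\}\\ &\quad+m_1\frac{\Delta}{p_1+p_3}\big(P_{m_1-1,m_2}-P_{m_1,m_2}\big)-m_2\frac{\Delta}{p_2+p_4}\big(P_{m_1,m_2-1}-P_{m_1,m_2}\big)\\ &=\big((p_1+p_2)x_1-(p_3+p_4)x_2\big)P_{m_1,m_2}(x_1,x_2), \end{align*} where every $P$ is evaluated at $(x_1,x_2)$.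
   Context: Notation: $(a)_k=a(a+1)\cdots(a+k-1)$, $(a)_0=1$, is the Pochhammer symbol. For a nonnegative integer $N$, nonnegative integers $m_1,m_2,x_1,x_2$ with $x_1+x_2\le N$, and parameters $u_1,v_1,u_2,v_2$, define \[ P_{m_1,m_2}(x_1,x_2)=\sum_{\substack{i,j,k,l\ge 0\\ i+j+k+l\le N}}\frac{(-m_1)_{i+j}(-m_2)_{k+l}(-x_1)_{i+k}(-x_2)_{j+l}}{i!\,j!\,k!\,l!\,(-N)_{i+j+k+l}}\,u_1^i v_1^j u_2^k v_2^l . \] *)

(* Defs.v *)
From HB Require Import structures.
From mathcomp Require Import all_boot all_order all_algebra.
Set Implicit Arguments. Unset Strict Implicit. Unset Printing Implicit Defensive.
Import Order.TTheory GRing.Theory Num.Theory.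
Local Open Scope ring_scope.

Definition poch {R : pzRingType} (a : R) (k : nat) : R :=
  \prod_(t < k) (a + t%:R).

Definition Pkrawt {R : fieldType} (N : nat) (u1 v1 u2 v2 : R)
    (m1 m2 x1 x2 : nat) : R :=
  \sum_(i < N.+1) \sum_(j < N.+1) \sum_(k < N.+1) \sum_(l < N.+1)
    if (i + j + k + l <= N)%N then
      poch (- m1%:R) (i + j) * poch (- m2%:R) (k + l)
      * poch (- x1%:R) (i + k) * poch (- x2%:R) (j + l)
      / ((i`! * j`! * k`! * l`!)%:R * poch (- N%:R) (i + j + k + l))
      * u1 ^+ i * v1 ^+ j * u2 ^+ k * v2 ^+ l
    else 0.

(* Main.v *)
Require Import Defs.
From HB Require Import structures.
From mathcomp Require Import all_boot all_order all_algebra.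
From Stdlib Require Import Ring Field Lia.
Import Order.TTheory GRing.Theory Num.Theory.
Local Open Scope ring_scope.

Section K.
Variable R : realFieldType.
Definition radd (a b : R) : R := a + b.
Definition rmul (a b : R) : R := a * b.
Definition ropp (a : R) : R := - a.
Definition rinv (a : R) : R := a^-1.
Definition rsub (a b : R) : R := a - b.
Definition rdiv (a b : R) : R := a / b.
Definition r0 : R := 0.
Definition r1 : R := 1.
Definition rnat (n : nat) : R := n%:R.
Lemma RF : @field_theory R r0 r1 radd rmul rsub ropp rdiv rinv eq.
Proof.
split.
- split; rewrite /radd /rmul /rsub /ropp /r0 /r1.
  + exact: add0r. + exact: addrC. + exact: addrA. + exact: mul1r. + exact: mulrC. + exact: mulrA. + exact: mulrDl. + done. + exact: subrr.
- by rewrite /r1 /r0; apply/eqP; rewrite oner_eq0.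
- done.
- by move=> p /eqP; exact: mulVf.
Qed.
Add Field RFld : RF.
Definition rpoch (a : R) (n : nat) : R := poch a n.
Definition rexp (a : R) (n : nat) : R := a ^+ n.
Lemma pochE (a : R) n : poch a n = rpoch a n. Proof. by []. Qed.
Lemma expE (a : R) n : a ^+ n = rexp a n. Proof. by []. Qed.
Lemma natS n : (n.+1)%:R = n%:R + 1 :> R. Proof. by rewrite -addn1 natrD. Qed.
Lemma addE (a b : R) : a + b = radd a b. Proof. by []. Qed.
Lemma mulE (a b : R) : a * b = rmul a b. Proof. by []. Qed.
Lemma oppE (a : R) : - a = ropp a. Proof. by []. Qed.
Lemma invE (a : R) : a^-1 = rinv a. Proof. by []. Qed.
Lemma zeroE : 0 = r0 :> R. Proof. by []. Qed.
Lemma oneE : 1 = r1 :> R. Proof. by []. Qed.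
Lemma natE n : n%:R = rnat n :> R. Proof. by []. Qed.
Ltac rnorm := rewrite ?pochE ?expE ?natS ?natrD ?natS ?mulr1n ?mulr0n ?natE ?invE ?oppE ?mulE ?addE ?zeroE ?oneE;
  match goal with |- ?a = ?b => change (@eq R a b) end.
Ltac unnorm := rewrite /rpoch /rexp /radd /rmul /ropp /rinv /rsub /rdiv /r0 /r1 /rnat.
Ltac rring := rnorm; ring.
Ltac rfield := rnorm; field; unnorm.

Lemma pochS (a : R) s : poch a s.+1 = poch a s * (a + s%:R).
Proof. by rewrite /poch big_ord_recr. Qed.

Lemma pochSl (a : R) s : poch a s.+1 = a * poch (a + 1) s.
Proof.
rewrite /poch big_ord_recl addr0; congr (_ * _); apply: eq_bigr => t _.
rewrite lift0 -addn1 natrD; rring.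
Qed.

Lemma poch0 (a : R) : poch a 0 = 1.
Proof. by rewrite /poch big_ord0. Qed.

Lemma poch_zero (x s : nat) : (x < s)%N -> poch (- x%:R : R) s = 0.
Proof.
move=> h; rewrite /poch (bigD1 (Ordinal h)) //= addNr mul0r //.
Qed.

Lemma pochN_neq0 (N n : nat) : (n <= N)%N -> poch (- N%:R : R) n != 0.
Proof.
move=> h; rewrite /poch; apply/prodf_neq0 => t _.
rewrite addrC subr_eq0 eqr_nat; apply/negP => /eqP e.
by move: (ltn_ord t); rewrite e ltnNge h.
Qed.

Lemma poch_up (a : R) s : poch (a - 1) s - poch a s = - s%:R * poch a s.-1.
Proof.
case: s => [|s]; first by rewrite !poch0; rring.
rewrite pochSl pochS /= subrK -addn1 natrD; rring.
Qed.

Lemma poch_dn (a : R) s : a * (poch (a + 1) s - poch a s) = s%:R * poch a s.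
Proof.
rewrite mulrBr -pochSl pochS; rring.
Qed.

Variables (u1 v1 u2 v2 : R) (N x1 x2 : nat).
Hypotheses (hu1 : u1 != 0) (hv1 : v1 != 0) (hu2 : u2 != 0) (hv2 : v2 != 0).
Hypothesis hx : (x1 + x2 <= N)%N.

Definition pm (m s : nat) : R := poch (- m%:R) s.
Definition Qn (n : nat) : R := (poch (- N%:R : R) n)^-1.
Definition W (i j k l : nat) : R :=
  u1 ^+ i * v1 ^+ j * u2 ^+ k * v2 ^+ l / (i`! * j`! * k`! * l`!)%:R.
Definition sum4 (F : nat -> nat -> nat -> nat -> R) : R :=
  \sum_(i < N.+1) \sum_(j < N.+1) \sum_(k < N.+1) \sum_(l < N.+1) F i j k l.
Definition E0 m1 m2 i j k l : R :=
  Qn (i+j+k+l)%N * pm m1 (i+j)%N * pm m2 (k+l)%N * pm x1 (i+k)%N * pm x2 (j+l)%N.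
Definition E1 m1 m2 i j k l : R :=
  Qn (i+j+k+l)%N * pm m1 (i+j)%N * pm m2 (k+l)%N * pm x1 (i+k)%N.+1 * pm x2 (j+l)%N.
Definition E2 m1 m2 i j k l : R :=
  Qn (i+j+k+l)%N * pm m1 (i+j)%N * pm m2 (k+l)%N * pm x1 (i+k)%N * pm x2 (j+l)%N.+1.
Definition Pm m1 m2 := sum4 (fun i j k l => W i j k l * E0 m1 m2 i j k l).

Lemma fnz n : (n`!)%:R != 0 :> R.
Proof. by rewrite pnatr_eq0 -lt0n fact_gt0. Qed.
Lemma snz n : n%:R + 1 != 0 :> R.
Proof. by rewrite -natS pnatr_eq0. Qed.

Lemma Wi i j k l : (i.+1)%:R * W i.+1 j k l = u1 * W i j k l.
Proof.
rewrite /W factS !natrM exprS.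
have := fnz i; have := fnz j; have := fnz k; have := fnz l; have := snz i.
move=> /eqP h1 /eqP h2 /eqP h3 /eqP h4 /eqP h5.
rfield; tauto.
Qed.
Lemma Wj i j k l : (j.+1)%:R * W i j.+1 k l = v1 * W i j k l.
Proof.
rewrite /W factS !natrM exprS.
have := fnz i; have := fnz j; have := fnz k; have := fnz l; have := snz j.
move=> /eqP h1 /eqP h2 /eqP h3 /eqP h4 /eqP h5.
rfield; tauto.
Qed.
Lemma Wk i j k l : (k.+1)%:R * W i j k.+1 l = u2 * W i j k l.
Proof.
rewrite /W factS !natrM exprS.
have := fnz i; have := fnz j; have := fnz k; have := fnz l; have := snz k.
move=> /eqP h1 /eqP h2 /eqP h3 /eqP h4 /eqP h5.
rfield; tauto.
Qed.
Lemma Wl i j k l : (l.+1)%:R * W i j k l.+1 = v2 * W i j k l.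
Proof.
rewrite /W factS !natrM exprS.
have := fnz i; have := fnz j; have := fnz k; have := fnz l; have := snz l.
move=> /eqP h1 /eqP h2 /eqP h3 /eqP h4 /eqP h5.
rfield; tauto.
Qed.

Lemma sum4D F G : sum4 F + sum4 G = sum4 (fun i j k l => F i j k l + G i j k l).
Proof.
rewrite /sum4 -big_split; apply: eq_bigr => i _; rewrite -big_split.
apply: eq_bigr => j _; rewrite -big_split; apply: eq_bigr => k _.
by rewrite -big_split.
Qed.
Lemma sum4N F : - sum4 F = sum4 (fun i j k l => - F i j k l).
Proof.
rewrite /sum4 -sumrN; apply: eq_bigr => i _; rewrite -sumrN.
apply: eq_bigr => j _; rewrite -sumrN; apply: eq_bigr => k _.
by rewrite -sumrN.
Qed.
Lemma sum4B F G : sum4 F - sum4 G = sum4 (fun i j k l => F i j k l - G i j k l).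
Proof. by rewrite sum4N sum4D. Qed.
Lemma sum4Z c F : c * sum4 F = sum4 (fun i j k l => c * F i j k l).
Proof.
rewrite /sum4 mulr_sumr; apply: eq_bigr => i _; rewrite mulr_sumr.
apply: eq_bigr => j _; rewrite mulr_sumr; apply: eq_bigr => k _.
by rewrite mulr_sumr.
Qed.
Lemma eq_sum4 F G : (forall i j k l, F i j k l = G i j k l) -> sum4 F = sum4 G.
Proof.
move=> h; rewrite /sum4; apply: eq_bigr => i _; apply: eq_bigr => j _.
by apply: eq_bigr => k _; apply: eq_bigr => l _.
Qed.

Lemma shift1 (g : nat -> R) : g 0%N = 0 -> g N.+1 = 0 ->
  \sum_(i < N.+1) g i = \sum_(i < N.+1) g i.+1.
Proof.
move=> h0 hN; rewrite big_ord_recl h0 add0r [RHS]big_ord_recr /= hN addr0.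
by apply: eq_bigr => i _; rewrite ?lift0.
Qed.

Lemma shift_i F : (forall j k l, F 0%N j k l = 0) -> (forall j k l, F N.+1 j k l = 0) ->
  sum4 F = sum4 (fun i j k l => F i.+1 j k l).
Proof.
move=> h0 hN; rewrite /sum4; apply: (shift1 (fun i => \sum_(j < N.+1) \sum_(k < N.+1) \sum_(l < N.+1) F i j k l)).
- by apply: big1 => j _; apply: big1 => k _; apply: big1 => l _.
- by apply: big1 => j _; apply: big1 => k _; apply: big1 => l _.
Qed.
Lemma shift_j F : (forall i k l, F i 0%N k l = 0) -> (forall i k l, F i N.+1 k l = 0) ->
  sum4 F = sum4 (fun i j k l => F i j.+1 k l).
Proof.
move=> h0 hN; rewrite /sum4; apply: eq_bigr => i _.
apply: (shift1 (fun j => \sum_(k < N.+1) \sum_(l < N.+1) F i j k l)).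
- by apply: big1 => k _; apply: big1 => l _.
- by apply: big1 => k _; apply: big1 => l _.
Qed.
Lemma shift_k F : (forall i j l, F i j 0%N l = 0) -> (forall i j l, F i j N.+1 l = 0) ->
  sum4 F = sum4 (fun i j k l => F i j k.+1 l).
Proof.
move=> h0 hN; rewrite /sum4; apply: eq_bigr => i _; apply: eq_bigr => j _.
apply: (shift1 (fun k => \sum_(l < N.+1) F i j k l)).
- by apply: big1 => l _.
- by apply: big1 => l _.
Qed.
Lemma shift_l F : (forall i j k, F i j k 0%N = 0) -> (forall i j k, F i j k N.+1 = 0) ->
  sum4 F = sum4 (fun i j k l => F i j k l.+1).
Proof.
move=> h0 hN; rewrite /sum4; apply: eq_bigr => i _; apply: eq_bigr => j _.
by apply: eq_bigr => k _; apply: shift1.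
Qed.

Lemma pmz x s : (x < s)%N -> pm x s = 0.
Proof. exact: poch_zero. Qed.
Lemma hx1 : (x1 <= N)%N. Proof. exact: leq_trans (leq_addr _ _) hx. Qed.
Lemma hx2 : (x2 <= N)%N. Proof. exact: leq_trans (leq_addl _ _) hx. Qed.


Lemma addRN (a b : nat) : (a + b)%R = (a + b)%N. Proof. by []. Qed.

Lemma LP m1 m2 : Pkrawt N u1 v1 u2 v2 m1 m2 x1 x2 = Pm m1 m2.
Proof.
rewrite /Pkrawt /Pm /sum4; apply: eq_bigr => i _; apply: eq_bigr => j _.
apply: eq_bigr => k _; apply: eq_bigr => l _.
case: ifP => h.
- rewrite /W /E0 /Qn /pm invfM ?addRN; rring.
- rewrite /E0 /Qn poch_zero ?invr0 ?mul0r ?mulr0 //.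
  by rewrite ltnNge h.
Qed.

Lemma pm_dn m s : m%:R * (pm m.-1 s - pm m s) = - s%:R * pm m s.
Proof.
case: m => [|m].
- case: s => [|s]; first by rewrite /=; rring.
  by rewrite /pm poch_zero //; rring.
- rewrite /pm /=.
  have -> : - (m%:R) = - (m.+1)%:R + 1 :> R by rewrite -addn1 natrD; rring.
  have := poch_dn (- (m.+1)%:R) s => e.
  transitivity (- ((- (m.+1)%:R : R) * (poch (- (m.+1)%:R + 1 : R) s - poch (- (m.+1)%:R : R) s))); first by rring.
  rewrite e; rring.
Qed.

Lemma LC m1 m2 : m1%:R * (Pm m1.-1 m2 - Pm m1 m2) =
  sum4 (fun i j k l => W i j k l * (- (i+j)%N%:R * E0 m1 m2 i j k l)).
Proof.
rewrite /Pm sum4B sum4Z; apply: eq_sum4 => i j k l; rewrite /E0.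
transitivity (W i j k l * Qn (i+j+k+l)%N * (m1%:R * (pm m1.-1 (i+j)%N - pm m1 (i+j)%N)) * pm m2 (k+l)%N * pm x1 (i+k)%N * pm x2 (j+l)%N); first by rring.
rewrite pm_dn; rring.
Qed.

Lemma LD m1 m2 : m2%:R * (Pm m1 m2.-1 - Pm m1 m2) =
  sum4 (fun i j k l => W i j k l * (- (k+l)%N%:R * E0 m1 m2 i j k l)).
Proof.
rewrite /Pm sum4B sum4Z; apply: eq_sum4 => i j k l; rewrite /E0.
transitivity (W i j k l * Qn (i+j+k+l)%N * pm m1 (i+j)%N * (m2%:R * (pm m2.-1 (k+l)%N - pm m2 (k+l)%N)) * pm x1 (i+k)%N * pm x2 (j+l)%N); first by rring.
rewrite pm_dn; rring.
Qed.

Lemma LX1 m1 m2 : x1%:R * Pm m1 m2 =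
  sum4 (fun i j k l => W i j k l * ((i+k)%N%:R * E0 m1 m2 i j k l - E1 m1 m2 i j k l)).
Proof.
rewrite /Pm sum4Z; apply: eq_sum4 => i j k l; rewrite /E0 /E1 [pm x1 (i+k)%N.+1]/pm pochS -/(pm x1 (i+k)%N); rring.
Qed.

Lemma LX2 m1 m2 : x2%:R * Pm m1 m2 =
  sum4 (fun i j k l => W i j k l * ((j+l)%N%:R * E0 m1 m2 i j k l - E2 m1 m2 i j k l)).
Proof.
rewrite /Pm sum4Z; apply: eq_sum4 => i j k l; rewrite /E0 /E2 [pm x2 (j+l)%N.+1]/pm pochS -/(pm x2 (j+l)%N); rring.
Qed.


Ltac xlt := apply/ssrnat.ltP; have := hx; move=> /ssrnat.leP ?; repeat rewrite <- plusE in *; lia.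

Lemma Xz a b : (x1 + x2 < a + b)%N -> pm x1 a = 0 \/ pm x2 b = 0.
Proof.
move=> h; case: (ltnP x1 a) => h1; first by left; exact: pmz.
right; apply: pmz.
move/ssrnat.ltP: h => h; move/ssrnat.leP: h1 => h1; apply/ssrnat.ltP; rewrite -?plusE in h h1 *; lia.
Qed.

Lemma PA m1 m2 i j k l : (m1 + m2 <= N)%N ->
  (N - m1 - m2)%N%:R * (W i j k l * E0 m1.+1 m2 i j k l - W i j k l * E0 m1 m2 i j k l) =
  W i j k l * ((i+j)%N%:R * (Qn (i+j+k+l)%N.-1 * pm m1 (i+j)%N.-1 * pm m2 (k+l)%N * pm x1 (i+k)%N * pm x2 (j+l)%N))
  - W i j k l * ((i+j)%N%:R * E0 m1 m2 i j k l)
  - W i j k l * ((i+j)%N%:R * (Qn (i+j+k+l)%N * pm m1 (i+j)%N.-1 * pm m2 (k+l)%N.+1 * pm x1 (i+k)%N * pm x2 (j+l)%N)).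
Proof.
move=> hm; rewrite /E0.
have e1 : pm m1.+1 (i+j)%N - pm m1 (i+j)%N = - (i+j)%N%:R * pm m1 (i+j)%N.-1.
  by rewrite /pm -addn1 natrD mulr1n opprD poch_up.
transitivity ((N - m1 - m2)%N%:R * W i j k l * Qn (i+j+k+l)%N * (pm m1.+1 (i+j)%N - pm m1 (i+j)%N) * pm m2 (k+l)%N * pm x1 (i+k)%N * pm x2 (j+l)%N); first by rring.
rewrite e1 -subnDA natrB // natrD.
move: e1; case E: (i + j)%N => [|s] _; first by rring.
rewrite !addSn /=.
case: (ltnP (s + k + l)%N N) => hn.
- rewrite /Qn pochS.
  have hq := @pochN_neq0 N _ (ltnW hn). have hd : - N%:R + (s + k + l)%N%:R != 0 :> R.
    rewrite addrC subr_eq0 eqr_nat; apply/negP => /eqP e; by rewrite e ltnn in hn.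
  rewrite [pm m1 s.+1]/pm pochS -/(pm m1 s) [pm m2 (k+l)%N.+1]/pm pochS -/(pm m2 (k+l)%N).
  move: hq hd.
  set q := poch (- N%:R) (s + k + l)%N; set d := - N%:R + (s + k + l)%N%:R.
  move=> /eqP hq /eqP hd.
  have eN : N%:R = (s + k + l)%N%:R - d :> R by rewrite /d; rring.
  rewrite eN; rfield; tauto.
- have : (x1 + x2 < (i + k)%N + (j + l)%N)%N.
    move/ssrnat.leP: hn => hn; apply/ssrnat.ltP; move: hx => /ssrnat.leP h2.
    rewrite -?plusE in E h2 hn *; lia.
  by case/Xz => ->; rring.
Qed.


Lemma P1 m1 m2 :
  sum4 (fun i j k l => W i j k l * ((i+j)%N%:R * (Qn (i+j+k+l)%N.-1 * pm m1 (i+j)%N.-1 * pm m2 (k+l)%N * pm x1 (i+k)%N * pm x2 (j+l)%N)))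
  = sum4 (fun i j k l => W i j k l * (u1 * E1 m1 m2 i j k l + v1 * E2 m1 m2 i j k l)).
Proof.
set G := fun i j k l => Qn (i+j+k+l)%N.-1 * pm m1 (i+j)%N.-1 * pm m2 (k+l)%N * pm x1 (i+k)%N * pm x2 (j+l)%N.
transitivity (sum4 (fun i j k l => W i j k l * (i%:R * G i j k l)) + sum4 (fun i j k l => W i j k l * (j%:R * G i j k l))).
  by rewrite sum4D; apply: eq_sum4 => i j k l; rewrite /G; rring.
rewrite (shift_i (fun i j k l => W i j k l * (i%:R * G i j k l))); first last.
- move=> j k l; rewrite /G (pmz x1); first by rring. xlt.
- by move=> j k l; rring.
rewrite (shift_j (fun i j k l => W i j k l * (j%:R * G i j k l))); first last.
- move=> i k l; rewrite /G (pmz x2); first by rring. xlt.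
- by move=> i k l; rring.
rewrite sum4D; apply: eq_sum4 => i j k l.
transitivity ((i.+1%:R * W i.+1 j k l) * G i.+1 j k l + (j.+1%:R * W i j.+1 k l) * G i j.+1 k l); first by rring.
rewrite Wi Wj /G /E1 /E2 ?addSn ?addnS /=; rring.
Qed.

Lemma P3 m1 m2 :
  sum4 (fun i j k l => W i j k l * ((i+j)%N%:R * (Qn (i+j+k+l)%N * pm m1 (i+j)%N.-1 * pm m2 (k+l)%N.+1 * pm x1 (i+k)%N * pm x2 (j+l)%N)))
  = sum4 (fun i j k l => W i j k l * ((u1/u2 * k%:R + v1/v2 * l%:R) * E0 m1 m2 i j k l)).
Proof.
set G := fun i j k l => Qn (i+j+k+l)%N * pm m1 (i+j)%N.-1 * pm m2 (k+l)%N.+1 * pm x1 (i+k)%N * pm x2 (j+l)%N.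
transitivity (sum4 (fun i j k l => W i j k l * (i%:R * G i j k l)) + sum4 (fun i j k l => W i j k l * (j%:R * G i j k l))).
  by rewrite sum4D; apply: eq_sum4 => i j k l; rewrite /G; rring.
symmetry.
transitivity (sum4 (fun i j k l => W i j k l * (u1/u2 * (k%:R * E0 m1 m2 i j k l))) + sum4 (fun i j k l => W i j k l * (v1/v2 * (l%:R * E0 m1 m2 i j k l)))).
  by rewrite sum4D; apply: eq_sum4 => i j k l; rring.
symmetry.
congr (_ + _).
- rewrite (shift_i (fun i j k l => W i j k l * (i%:R * G i j k l))); first last.
  + move=> j k l; rewrite /G (pmz x1); first by rring. xlt.
  + by move=> j k l; rring.
  rewrite [RHS](shift_k (fun i j k l => W i j k l * (u1/u2 * (k%:R * E0 m1 m2 i j k l)))); first last.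
  + move=> i j l; rewrite /E0 (pmz x1); first by rring. xlt.
  + by move=> i j l; rring.
  apply: eq_sum4 => i j k l.
  transitivity ((i.+1%:R * W i.+1 j k l) * G i.+1 j k l); first by rring.
  transitivity (u1/u2 * ((k.+1%:R * W i j k.+1 l) * E0 m1 m2 i j k.+1 l)); last by rring.
  rewrite Wi Wk /G /E0 ?addSn ?addnS /=.
  move/eqP: hu2 => h; rfield; tauto.
- rewrite (shift_j (fun i j k l => W i j k l * (j%:R * G i j k l))); first last.
  + move=> i k l; rewrite /G (pmz x2); first by rring. xlt.
  + by move=> i k l; rring.
  rewrite [RHS](shift_l (fun i j k l => W i j k l * (v1/v2 * (l%:R * E0 m1 m2 i j k l)))); first last.
  + move=> i j k; rewrite /E0 (pmz x2); first by rring. xlt.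
  + by move=> i j k; rring.
  apply: eq_sum4 => i j k l.
  transitivity ((j.+1%:R * W i j.+1 k l) * G i j.+1 k l); first by rring.
  transitivity (v1/v2 * ((l.+1%:R * W i j k l.+1) * E0 m1 m2 i j k l.+1)); last by rring.
  rewrite Wj Wl /G /E0 ?addSn ?addnS /=.
  move/eqP: hv2 => h; rfield; tauto.
Qed.


Lemma LA m1 m2 : (m1 + m2 <= N)%N ->
  (N - m1 - m2)%N%:R * (Pm m1.+1 m2 - Pm m1 m2) =
  sum4 (fun i j k l => W i j k l * (u1 * E1 m1 m2 i j k l + v1 * E2 m1 m2 i j k l
     - (i+j)%N%:R * E0 m1 m2 i j k l - (u1/u2 * k%:R + v1/v2 * l%:R) * E0 m1 m2 i j k l)).
Proof.
move=> hm; rewrite /Pm sum4B sum4Z.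
transitivity (
  sum4 (fun i j k l => W i j k l * ((i+j)%N%:R * (Qn (i+j+k+l)%N.-1 * pm m1 (i+j)%N.-1 * pm m2 (k+l)%N * pm x1 (i+k)%N * pm x2 (j+l)%N)))
  - sum4 (fun i j k l => W i j k l * ((i+j)%N%:R * E0 m1 m2 i j k l))
  - sum4 (fun i j k l => W i j k l * ((i+j)%N%:R * (Qn (i+j+k+l)%N * pm m1 (i+j)%N.-1 * pm m2 (k+l)%N.+1 * pm x1 (i+k)%N * pm x2 (j+l)%N)))).
  by rewrite !sum4B; apply: eq_sum4 => i j k l; apply: PA.
rewrite P1 P3 !sum4B; apply: eq_sum4 => i j k l; rring.
Qed.


Lemma PB m1 m2 i j k l : (m1 + m2 <= N)%N ->
  (N - m1 - m2)%N%:R * (W i j k l * E0 m1 m2.+1 i j k l - W i j k l * E0 m1 m2 i j k l) =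
  W i j k l * ((k+l)%N%:R * (Qn (i+j+k+l)%N.-1 * pm m1 (i+j)%N * pm m2 (k+l)%N.-1 * pm x1 (i+k)%N * pm x2 (j+l)%N))
  - W i j k l * ((k+l)%N%:R * E0 m1 m2 i j k l)
  - W i j k l * ((k+l)%N%:R * (Qn (i+j+k+l)%N * pm m1 (i+j)%N.+1 * pm m2 (k+l)%N.-1 * pm x1 (i+k)%N * pm x2 (j+l)%N)).
Proof.
move=> hm; rewrite /E0.
have e1 : pm m2.+1 (k+l)%N - pm m2 (k+l)%N = - (k+l)%N%:R * pm m2 (k+l)%N.-1.
  by rewrite /pm -addn1 natrD mulr1n opprD poch_up.
transitivity ((N - m1 - m2)%N%:R * W i j k l * Qn (i+j+k+l)%N * pm m1 (i+j)%N * (pm m2.+1 (k+l)%N - pm m2 (k+l)%N) * pm x1 (i+k)%N * pm x2 (j+l)%N); first by rring.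
rewrite e1 -subnDA natrB // natrD.
rewrite -[(i+j+k+l)%N]addnA.
move: e1; case E: (k + l)%N => [|t] _; first by rring.
rewrite !addnS /=.
case: (ltnP (i + j + t)%N N) => hn.
- rewrite /Qn pochS.
  have hq := @pochN_neq0 N _ (ltnW hn). have hd : - N%:R + (i + j + t)%N%:R != 0 :> R.
    rewrite addrC subr_eq0 eqr_nat; apply/negP => /eqP e; by rewrite e ltnn in hn.
  rewrite [pm m2 t.+1]/pm pochS -/(pm m2 t) [pm m1 (i+j)%N.+1]/pm pochS -/(pm m1 (i+j)%N).
  move: hq hd.
  set q := poch (- N%:R) (i + j + t)%N; set d := - N%:R + (i + j + t)%N%:R.
  move=> /eqP hq /eqP hd.
  have eN : N%:R = (i + j + t)%N%:R - d :> R by rewrite /d; rring.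
  rewrite eN; rfield; tauto.
- have : (x1 + x2 < (i + k)%N + (j + l)%N)%N.
    move/ssrnat.leP: hn => hn; apply/ssrnat.ltP; move: hx => /ssrnat.leP h2.
    rewrite -?plusE in E h2 hn *; lia.
  by case/Xz => ->; rring.
Qed.

Lemma P2 m1 m2 :
  sum4 (fun i j k l => W i j k l * ((k+l)%N%:R * (Qn (i+j+k+l)%N.-1 * pm m1 (i+j)%N * pm m2 (k+l)%N.-1 * pm x1 (i+k)%N * pm x2 (j+l)%N)))
  = sum4 (fun i j k l => W i j k l * (u2 * E1 m1 m2 i j k l + v2 * E2 m1 m2 i j k l)).
Proof.
set G := fun i j k l => Qn (i+j+k+l)%N.-1 * pm m1 (i+j)%N * pm m2 (k+l)%N.-1 * pm x1 (i+k)%N * pm x2 (j+l)%N.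
transitivity (sum4 (fun i j k l => W i j k l * (k%:R * G i j k l)) + sum4 (fun i j k l => W i j k l * (l%:R * G i j k l))).
  by rewrite sum4D; apply: eq_sum4 => i j k l; rewrite /G; rring.
rewrite (shift_k (fun i j k l => W i j k l * (k%:R * G i j k l))); first last.
- move=> i j l; rewrite /G (pmz x1); first by rring. xlt.
- by move=> i j l; rring.
rewrite (shift_l (fun i j k l => W i j k l * (l%:R * G i j k l))); first last.
- move=> i j k; rewrite /G (pmz x2); first by rring. xlt.
- by move=> i j k; rring.
rewrite sum4D; apply: eq_sum4 => i j k l.
transitivity ((k.+1%:R * W i j k.+1 l) * G i j k.+1 l + (l.+1%:R * W i j k l.+1) * G i j k l.+1); first by rring.
rewrite Wk Wl /G /E1 /E2 ?addSn ?addnS /=; rring.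
Qed.

Lemma P4 m1 m2 :
  sum4 (fun i j k l => W i j k l * ((k+l)%N%:R * (Qn (i+j+k+l)%N * pm m1 (i+j)%N.+1 * pm m2 (k+l)%N.-1 * pm x1 (i+k)%N * pm x2 (j+l)%N)))
  = sum4 (fun i j k l => W i j k l * ((u2/u1 * i%:R + v2/v1 * j%:R) * E0 m1 m2 i j k l)).
Proof.
set G := fun i j k l => Qn (i+j+k+l)%N * pm m1 (i+j)%N.+1 * pm m2 (k+l)%N.-1 * pm x1 (i+k)%N * pm x2 (j+l)%N.
transitivity (sum4 (fun i j k l => W i j k l * (k%:R * G i j k l)) + sum4 (fun i j k l => W i j k l * (l%:R * G i j k l))).
  by rewrite sum4D; apply: eq_sum4 => i j k l; rewrite /G; rring.
symmetry.
transitivity (sum4 (fun i j k l => W i j k l * (u2/u1 * (i%:R * E0 m1 m2 i j k l))) + sum4 (fun i j k l => W i j k l * (v2/v1 * (j%:R * E0 m1 m2 i j k l)))).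
  by rewrite sum4D; apply: eq_sum4 => i j k l; rring.
symmetry.
congr (_ + _).
- rewrite (shift_k (fun i j k l => W i j k l * (k%:R * G i j k l))); first last.
  + move=> i j l; rewrite /G (pmz x1); first by rring. xlt.
  + by move=> i j l; rring.
  rewrite [RHS](shift_i (fun i j k l => W i j k l * (u2/u1 * (i%:R * E0 m1 m2 i j k l)))); first last.
  + move=> j k l; rewrite /E0 (pmz x1); first by rring. xlt.
  + by move=> j k l; rring.
  apply: eq_sum4 => i j k l.
  transitivity ((k.+1%:R * W i j k.+1 l) * G i j k.+1 l); first by rring.
  transitivity (u2/u1 * ((i.+1%:R * W i.+1 j k l) * E0 m1 m2 i.+1 j k l)); last by rring.
  rewrite Wi Wk /G /E0 ?addSn ?addnS /=.
  move/eqP: hu1 => h; rfield; tauto.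
- rewrite (shift_l (fun i j k l => W i j k l * (l%:R * G i j k l))); first last.
  + move=> i j k; rewrite /G (pmz x2); first by rring. xlt.
  + by move=> i j k; rring.
  rewrite [RHS](shift_j (fun i j k l => W i j k l * (v2/v1 * (j%:R * E0 m1 m2 i j k l)))); first last.
  + move=> i k l; rewrite /E0 (pmz x2); first by rring. xlt.
  + by move=> i k l; rring.
  apply: eq_sum4 => i j k l.
  transitivity ((l.+1%:R * W i j k l.+1) * G i j k l.+1); first by rring.
  transitivity (v2/v1 * ((j.+1%:R * W i j.+1 k l) * E0 m1 m2 i j.+1 k l)); last by rring.
  rewrite Wj Wl /G /E0 ?addSn ?addnS /=.
  move/eqP: hv1 => h; rfield; tauto.
Qed.

Lemma LB m1 m2 : (m1 + m2 <= N)%N ->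
  (N - m1 - m2)%N%:R * (Pm m1 m2.+1 - Pm m1 m2) =
  sum4 (fun i j k l => W i j k l * (u2 * E1 m1 m2 i j k l + v2 * E2 m1 m2 i j k l
     - (k+l)%N%:R * E0 m1 m2 i j k l - (u2/u1 * i%:R + v2/v1 * j%:R) * E0 m1 m2 i j k l)).
Proof.
move=> hm; rewrite /Pm sum4B sum4Z.
transitivity (
  sum4 (fun i j k l => W i j k l * ((k+l)%N%:R * (Qn (i+j+k+l)%N.-1 * pm m1 (i+j)%N * pm m2 (k+l)%N.-1 * pm x1 (i+k)%N * pm x2 (j+l)%N)))
  - sum4 (fun i j k l => W i j k l * ((k+l)%N%:R * E0 m1 m2 i j k l))
  - sum4 (fun i j k l => W i j k l * ((k+l)%N%:R * (Qn (i+j+k+l)%N * pm m1 (i+j)%N.+1 * pm m2 (k+l)%N.-1 * pm x1 (i+k)%N * pm x2 (j+l)%N)))).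
  by rewrite !sum4B; apply: eq_sum4 => i j k l; apply: PB.
rewrite P2 P4 !sum4B; apply: eq_sum4 => i j k l; rring.
Qed.


Lemma KEY (p1 p2 p3 p4 : R) m1 m2 :
  p1 != 0 -> p2 != 0 -> p3 != 0 -> p4 != 0 ->
  p1 + p2 + p3 + p4 != 0 -> p1 * p4 - p2 * p3 != 0 ->
  p1 + p3 != 0 -> p2 + p4 != 0 -> p1 + p2 != 0 -> p3 + p4 != 0 ->
  u1 = (p1 + p2) * (p1 + p3) / (p1 * (p1 + p2 + p3 + p4)) ->
  u2 = (p1 + p2) * (p2 + p4) / (p2 * (p1 + p2 + p3 + p4)) ->
  v1 = (p1 + p3) * (p3 + p4) / (p3 * (p1 + p2 + p3 + p4)) ->
  v2 = (p2 + p4) * (p3 + p4) / (p4 * (p1 + p2 + p3 + p4)) ->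
  (m1 + m2 <= N)%N ->
  (N - m1 - m2)%N%:R *
      (p1 * p3 * (p2 + p4) * (p1 + p2 + p3 + p4) / ((p1 + p3) * (p1 * p4 - p2 * p3)) * (Pm m1.+1 m2 - Pm m1 m2)
       - p2 * p4 * (p1 + p3) * (p1 + p2 + p3 + p4) / ((p2 + p4) * (p1 * p4 - p2 * p3)) * (Pm m1 m2.+1 - Pm m1 m2))
    + m1%:R * ((p1 * p4 - p2 * p3) / (p1 + p3)) * (Pm m1.-1 m2 - Pm m1 m2)
    - m2%:R * ((p1 * p4 - p2 * p3) / (p2 + p4)) * (Pm m1 m2.-1 - Pm m1 m2)
  = ((p1 + p2) * x1%:R - (p3 + p4) * x2%:R) * Pm m1 m2.
Proof.
move=> /eqP h1 /eqP h2 /eqP h3 /eqP h4 /eqP hS /eqP hD /eqP h13 /eqP h24 /eqP h12 /eqP h34 e1 e2 e3 e4 hm.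
set S := p1 + p2 + p3 + p4. set D := p1 * p4 - p2 * p3.
transitivity (p1 * p3 * (p2 + p4) * S / ((p1 + p3) * D) * ((N - m1 - m2)%N%:R * (Pm m1.+1 m2 - Pm m1 m2))
  - p2 * p4 * (p1 + p3) * S / ((p2 + p4) * D) * ((N - m1 - m2)%N%:R * (Pm m1 m2.+1 - Pm m1 m2))
  + D / (p1 + p3) * (m1%:R * (Pm m1.-1 m2 - Pm m1 m2))
  - D / (p2 + p4) * (m2%:R * (Pm m1 m2.-1 - Pm m1 m2))); first by rring.
rewrite LA // LB // LC LD.
transitivity ((p1 + p2) * (x1%:R * Pm m1 m2) - (p3 + p4) * (x2%:R * Pm m1 m2)); last by rring.
rewrite LX1 LX2 !sum4Z !sum4B sum4D sum4B.
apply: eq_sum4 => i j k l.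
rewrite e1 e2 e3 e4 /S /D.
rfield; tauto.
Qed.

End K.


Theorem mainTheorem5 (R : realFieldType) (p1 p2 p3 p4 : R)
  (hp1 : 0 < p1) (hp2 : 0 < p2) (hp3 : 0 < p3) (hp4 : 0 < p4)
  (hD : p1 * p4 - p2 * p3 != 0)
  (N m1 m2 x1 x2 : nat) (hx : (x1 + x2 <= N)%N) (hm : (m1 + m2 <= N)%N) :
  let D := p1 * p4 - p2 * p3 in
  let S := p1 + p2 + p3 + p4 in
  let u1 := (p1 + p2) * (p1 + p3) / (p1 * S) in
  let u2 := (p1 + p2) * (p2 + p4) / (p2 * S) in
  let v1 := (p1 + p3) * (p3 + p4) / (p3 * S) in
  let v2 := (p2 + p4) * (p3 + p4) / (p4 * S) in
  let P a b := Pkrawt N u1 v1 u2 v2 a b x1 x2 in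
  (N - m1 - m2)%N%:R *
      (p1 * p3 * (p2 + p4) * S / ((p1 + p3) * D) * (P m1.+1 m2 - P m1 m2)
       - p2 * p4 * (p1 + p3) * S / ((p2 + p4) * D) * (P m1 m2.+1 - P m1 m2))
    + m1%:R * (D / (p1 + p3)) * (P m1.-1 m2 - P m1 m2)
    - m2%:R * (D / (p2 + p4)) * (P m1 m2.-1 - P m1 m2)
  = ((p1 + p2) * x1%:R - (p3 + p4) * x2%:R) * P m1 m2.
Proof.
move=> D S u1 u2 v1 v2 P.
have hS : 0 < S by rewrite /S !addr_gt0.
have n1 := lt0r_neq0 hp1. have n2 := lt0r_neq0 hp2.
have n3 := lt0r_neq0 hp3. have n4 := lt0r_neq0 hp4.
have nS := lt0r_neq0 hS.
have n13 : p1 + p3 != 0 by apply: lt0r_neq0; rewrite addr_gt0.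
have n24 : p2 + p4 != 0 by apply: lt0r_neq0; rewrite addr_gt0.
have n12 : p1 + p2 != 0 by apply: lt0r_neq0; rewrite addr_gt0.
have n34 : p3 + p4 != 0 by apply: lt0r_neq0; rewrite addr_gt0.
have hu1 : u1 != 0 by rewrite /u1 mulf_neq0 ?invr_neq0 ?mulf_neq0.
have hu2 : u2 != 0 by rewrite /u2 mulf_neq0 ?invr_neq0 ?mulf_neq0.
have hv1 : v1 != 0 by rewrite /v1 mulf_neq0 ?invr_neq0 ?mulf_neq0.
have hv2 : v2 != 0 by rewrite /v2 mulf_neq0 ?invr_neq0 ?mulf_neq0.
rewrite /P !LP.

have K := (@KEY R u1 v1 u2 v2 N x1 x2 hu1 hv1 hu2 hv2 hx p1 p2 p3 p4 m1 m2 n1 n2 n3 n4 nS hD n13 n24 n12 n34 erefl erefl erefl erefl hm).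
rewrite /D /S. exact K.
Qed.
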